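(* Consider a general-utility objective $G(\pi)=\mathcal{F}(\mu^\pi)$ as in the context and assume: (i) $\rho(s)\ge\rho_{\min}>0$ for all $s$; (ii) for every policy $\pi$, all entries of $\Gamma(\pi)$ lie in $[0,U]$ for some $U\ge0$; (iii) $G$ is $L$-smooth with respect to the Euclidean norm, i.e. $|G(\pi)-G(\pi')-\langle\nabla_\pi G(\pi'),\pi-\pi'\rangle|\le\frac{L}{2}\|\pi-\pi'\|_2^2$ for all policies $\pi,\pi'$. Let $\pi^*\in\arg\max_\pi G(\pi)$, let $\pi_0$ be an arbitrary policy and for $k\ge0$ let $\pi_{k+1}$ be obtained from $\pi_k$ by the projected Q-ascent update with step size $\eta=\rho_{\min}/L$. Then for every $K\ge1$, $$G(\pi^* )-G(\pi_K)\le\frac{32\,L\,\big(1+\frac{1}{(1-\gamma)\rho_{\min}}\big)}{(1-\gamma)^2\,\rho_{\min}\,K}.$$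
   Context: Finite MDP with state space $\mathcal{S}$, action space $\mathcal{A}$, transition kernel $\mathcal{P}$, initial distribution $\rho$, discount $\gamma\in[0,1)$. Policies are tables $\pi=(\pi(a\mid s))$ with $\pi(\cdot\mid s)\in\Delta_{\mathcal{A}}$, viewed as vectors in $\mathbb{R}^{|\mathcal{S}||\mathcal{A}|}$. The state-action occupancy measure is $\mu^\pi(s,a)=\sum_{s_0}\rho(s_0)\sum_{\tau\ge0}\gamma^\tau\Pr^\pi[s_\tau=s,a_\tau=a\mid s_0]$; $\mathcal{K}$ is the (convex) set of all occupancy measures, and $\pi\mapsto\mu^\pi$ is a bijection onto $\mathcal{K}$ with inverse $\pi(a\mid s)=\mu^\pi(s,a)/\sum_{a'}\mu^\pi(s,a')$. $\mathcal{F}:\mathcal{K}\to\mathbb{R}$ is concave and differentiable, $G(\pi)=\mathcal{F}(\mu^\pi)$, and the pseudo-reward is $\Gamma(\pi)=\nabla\mathcal{F}(\mu^\pi)\in\mathbb{R}^{\mathcal{S}\times\mathcal{A}}$. For a bounded $u$, $Q^\pi_u(s,a)=\mathbb{E}[\sum_{\tau\ge0}\gamma^\tau u(s_\tau,a_\tau)\mid s_0=s,a_0=a]$ under $\mathcal{P}$ and $\pi$. Projected Q-ascent (PQA) update: for every $s\in\mathcal{S}$, $\pi_{k+1}(\cdot\mid s)=\mathrm{Proj}_{\Delta_{\mathcal{A}}}\big[\pi_k(\cdot\mid s)+\eta\,Q^{\pi_k}_{\Gamma(\pi_k)}(s,\cdot)\big]$, with $\mathrm{Proj}_{\Delta_{\mathcal{A}}}$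 the Euclidean projection onto the probability simplex. *)

(* Defs.v *)
From HB Require Import structures.
From mathcomp Require Import all_boot all_order all_algebra.
From mathcomp Require Import all_classical all_reals all_analysis.
Set Implicit Arguments. Unset Strict Implicit. Unset Printing Implicit Defensive.
Import Order.TTheory GRing.Theory Num.Theory.
Import numFieldNormedType.Exports.
Local Open Scope ring_scope.

Section MDP.
Variables (R : realType) (n m : nat).
(* transition kernel: P s a s' = P(s' | s, a) *)
Variable (P : 'I_n -> 'I_m -> 'I_n -> R).

Definition is_kernel : Prop :=
  (forall s a s', 0 <= P s a s') /\ (forall s a, \sum_(s' < n) P s a s' = 1).

Definition is_distr (rho : 'I_n -> R) : Prop :=
  (forall s, 0 <= rho s) /\ \sum_(s < n) rho s = 1.

Definition in_simplex (p : 'I_m -> R) : Prop :=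
  (forall a, 0 <= p a) /\ \sum_(a < m) p a = 1.

Definition is_policy (pi : 'M[R]_(n, m)) : Prop :=
  forall s, in_simplex (fun a => pi s a).

Fixpoint state_dist (rho : 'I_n -> R) (pi : 'M[R]_(n, m)) (t : nat) : 'I_n -> R :=
  match t with
  | 0 => rho
  | t'.+1 => fun s' => \sum_(s < n) \sum_(a < m)
               state_dist rho pi t' s * pi s a * P s a s'
  end.

Definition occ (gamma : R) (rho : 'I_n -> R) (pi : 'M[R]_(n, m)) : 'M[R]_(n, m) :=
  \matrix_(s, a) limn (series (fun t : nat => gamma ^+ t * (state_dist rho pi t s * pi s a))).

(* Pr^pi[s_t = s', a_t = a' | s_0 = s, a_0 = a] *)
Fixpoint sa_dist (pi : 'M[R]_(n, m)) (s : 'I_n) (a : 'I_m) (t : nat)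
  : 'I_n -> 'I_m -> R :=
  match t with
  | 0 => fun s' a' => ((s' == s) && (a' == a))%:R
  | t'.+1 => fun s'' a'' => \sum_(s' < n) \sum_(a' < m)
               sa_dist pi s a t' s' a' * P s' a' s'' * pi s'' a''
  end.

Definition Qfun (gamma : R) (pi : 'M[R]_(n, m)) (u : 'M[R]_(n, m))
  (s : 'I_n) (a : 'I_m) : R :=
  limn (series (fun t : nat => gamma ^+ t *
     (\sum_(s' < n) \sum_(a' < m) sa_dist pi s a t s' a' * u s' a'))).

Definition occ_set (gamma : R) (rho : 'I_n -> R) : set 'M[R]_(n, m) :=
  [set mu | exists pi, is_policy pi /\ mu = occ gamma rho pi].

Definition grad (f : 'M[R]_(n, m) -> R) (x : 'M[R]_(n, m)) : 'M[R]_(n, m) :=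
  \matrix_(s, a) derive f x (delta_mx s a).

Definition frob_inner (x y : 'M[R]_(n, m)) : R :=
  \sum_(s < n) \sum_(a < m) x s a * y s a.

Definition sqnorm2 (x : 'M[R]_(n, m)) : R := frob_inner x x.

Definition Gobj (F : 'M[R]_(n, m) -> R) gamma rho (pi : 'M[R]_(n, m)) : R :=
  F (occ gamma rho pi).

Definition pseudo_reward (F : 'M[R]_(n, m) -> R) gamma rho (pi : 'M[R]_(n, m))
  : 'M[R]_(n, m) := grad F (occ gamma rho pi).

Definition is_simplex_proj (y q : 'I_m -> R) : Prop :=
  in_simplex q /\
  forall p, in_simplex p ->
    \sum_(a < m) (q a - y a) ^+ 2 <= \sum_(a < m) (p a - y a) ^+ 2.

Definition pqa_step F gamma rho (eta : R) (pik pik1 : 'M[R]_(n, m)) : Prop :=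
  forall s, is_simplex_proj
    (fun a => pik s a + eta * Qfun gamma pik (pseudo_reward F gamma rho pik) s a)
    (fun a => pik1 s a).

End MDP.

(* Main.v *)
Require Import Defs.
From HB Require Import structures.
From mathcomp Require Import all_boot all_order all_algebra.
From mathcomp Require Import all_classical all_reals all_analysis.
From mathcomp Require Import ring lra.
Set Implicit Arguments. Unset Strict Implicit. Unset Printing Implicit Defensive.
Import Order.TTheory GRing.Theory Num.Theory.
Import numFieldNormedType.Exports.
Local Open Scope classical_set_scope.
Local Open Scope ring_scope.

Section Ser.
Variable R : realType.

Lemma cvg_sum_seq (I : Type) (s : seq I) (u : I -> nat -> R) (l : I -> R) :
  (forall i, u i @ \oo --> l i) ->
  (fun N => \sum_(i <- s) u i N) @ \oo --> \sum_(i <- s) l i.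
Proof.
move=> h; elim: s => [|i s IH].
  rewrite big_nil; under eq_fun do rewrite big_nil; exact: cvg_cst.
rewrite big_cons; under eq_fun do rewrite big_cons.
exact: cvgD.
Qed.

Lemma cvg_sum_fin (I : finType) (u : I -> nat -> R) (l : I -> R) :
  (forall i, u i @ \oo --> l i) ->
  (fun N => \sum_i u i N) @ \oo --> \sum_i l i.
Proof. exact: cvg_sum_seq. Qed.

Lemma geo_sum (g : R) N : (1 - g) * \sum_(t < N) g ^+ t = 1 - g ^+ N.
Proof.
elim: N => [|N IH]; first by rewrite big_ord0 expr0 mulr0 subrr.
by rewrite big_ord_recr /= mulrDr IH exprS; ring.
Qed.

Lemma gsum_le (g B : R) (u : nat -> R) N : 0 <= g < 1 ->
  (forall t, 0 <= u t <= B) -> \sum_(t < N) g ^+ t * u t <= B / (1 - g).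
Proof.
move=> /andP[g0 g1] hu.
have h1g : 0 < 1 - g by rewrite subr_gt0.
have hB : 0 <= B by case/andP: (hu 0%N) => a b; exact: le_trans b.
apply: (@le_trans _ _ (\sum_(t < N) g ^+ t * B)).
  apply: ler_sum => t _; apply: ler_wpM2l; first exact: exprn_ge0.
  by case/andP: (hu t).
rewrite -mulr_suml ler_pdivlMr // -mulrA [B * _]mulrC mulrA [_ * (1 - g)]mulrC geo_sum.
rewrite mulrBl mul1r gerBl; apply: mulr_ge0 => //; exact: exprn_ge0.
Qed.

Lemma gser_cvg (g B : R) (u : nat -> R) : 0 <= g < 1 ->
  (forall t, 0 <= u t <= B) -> cvgn (series (fun t => g ^+ t * u t)).
Proof.
move=> hg hu; apply: nondecreasing_is_cvgn.
  rewrite seriesEnat; apply: (@nondecreasing_series _ _ xpredT) => t _ _; apply: mulr_ge0.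
    by apply: exprn_ge0; case/andP: hg.
  by case/andP: (hu t).
exists (B / (1 - g)) => _ [N _ <-]; rewrite seriesEord /=.
exact: gsum_le.
Qed.

Lemma gser_bounds (g B : R) (u : nat -> R) : 0 <= g < 1 ->
  (forall t, 0 <= u t <= B) ->
  0 <= limn (series (fun t => g ^+ t * u t)) <= B / (1 - g).
Proof.
move=> hg hu; have hc := gser_cvg hg hu.
apply/andP; split.
  apply: limr_ge => //; apply: nearW => N; rewrite seriesEord /=.
  apply: sumr_ge0 => t _; apply: mulr_ge0.
    by apply: exprn_ge0; case/andP: hg.
  by case/andP: (hu t).
apply: limr_le => //; apply: nearW => N; rewrite seriesEord /=.
exact: gsum_le.
Qed.

Lemma gser_shift (g : R) (u : nat -> R) :
  cvgn (series (fun t => g ^+ t * u t.+1)) ->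
  series (fun t => g ^+ t * u t) @ \oo -->
    u 0%N + g * limn (series (fun t => g ^+ t * u t.+1)).
Proof.
move=> hc; rewrite -cvg_shiftS.
have -> : [sequence series (fun t => g ^+ t * u t) n.+1]_n =
   (fun N => u 0%N + g * series (fun t => g ^+ t * u t.+1) N).
  apply: funext => N; rewrite !seriesEord /= big_ord_recl /= expr0 mul1r.
  congr (_ + _); rewrite mulr_sumr; apply: eq_bigr => i _.
  by rewrite /bump /= exprS mulrA.
apply: cvgD; first exact: cvg_cst.
exact: cvgMr.
Qed.

Lemma gser_lin (g : R) (I : finType) (c : I -> R) (u : I -> nat -> R) :
  (forall i, cvgn (series (fun t => g ^+ t * u i t))) ->
  series (fun t => g ^+ t * \sum_i c i * u i t) @ \oo -->
    \sum_i c i * limn (series (fun t => g ^+ t * u i t)).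
Proof.
move=> hc.
have -> : series (fun t => g ^+ t * \sum_i c i * u i t) =
   (fun N => \sum_i c i * series (fun t => g ^+ t * u i t) N).
  apply: funext => N; rewrite !seriesEord /=.
  under eq_bigr do rewrite mulr_sumr.
  rewrite exchange_big /=; apply: eq_bigr => i _.
  rewrite seriesEord /= mulr_sumr; apply: eq_bigr => t _; ring.
apply: cvg_sum_fin => i; exact: cvgMr.
Qed.

End Ser.

Section Ser2.
Variable R : realType.
Lemma gser_rec (g : R) (I : finType) (u : nat -> R) (c : I -> R) (v : I -> nat -> R) :
  (forall i, cvgn (series (fun t => g ^+ t * v i t))) ->
  (forall t, u t.+1 = \sum_i c i * v i t) ->
  limn (series (fun t => g ^+ t * u t)) =
    u 0%N + g * \sum_i c i * limn (series (fun t => g ^+ t * v i t)).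
Proof.
move=> hc hu; apply: cvg_lim => //; rewrite -cvg_shiftS.
have -> : [sequence series (fun t => g ^+ t * u t) n.+1]_n =
   (fun N => u 0%N + g * series (fun t => g ^+ t * \sum_i c i * v i t) N).
  apply: funext => N; rewrite !seriesEord /= big_ord_recl /= expr0 mul1r.
  congr (_ + _); rewrite mulr_sumr; apply: eq_bigr => i _.
  by rewrite /bump /= exprS hu mulrA.
apply: cvgD; first exact: cvg_cst.
apply: cvgMr; exact: gser_lin.
Qed.
End Ser2.
Section MDPfacts.
Variables (R : realType) (n m : nat) (P : 'I_n -> 'I_m -> 'I_n -> R) (rho : 'I_n -> R) (gamma : R).
Hypothesis hP : is_kernel P.
Hypothesis hrho : is_distr rho.
Hypothesis hg : 0 <= gamma < 1.

Lemma sd_props (pi : 'M[R]_(n, m)) : is_policy pi -> forall t,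
  (forall s, 0 <= state_dist P rho pi t s) /\ \sum_s state_dist P rho pi t s = 1.
Proof.
move=> hpi; elim=> [|t [IH1 IH2]] /=; first by case: hrho.
split.
  move=> s'; apply: sumr_ge0 => s _; apply: sumr_ge0 => a _.
  apply: mulr_ge0; [apply: mulr_ge0 => //; by case: (hpi s) | by case: hP].
rewrite exchange_big /= -IH2; apply: eq_bigr => s _.
rewrite exchange_big /=; case: (hpi s) => _ h1.
rewrite -[RHS]mulr1 -h1 mulr_sumr; apply: eq_bigr => a _.
by rewrite -mulr_sumr; case: hP => _ ->; rewrite mulr1.
Qed.

Lemma sd_bnd (pi : 'M[R]_(n, m)) : is_policy pi -> forall t s,
  0 <= state_dist P rho pi t s <= 1.
Proof.
move=> hpi t s; have [h1 h2] := sd_props hpi t.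
rewrite h1 /= -h2 (bigD1 s) //= lerDl; apply: sumr_ge0 => *; exact: h1.
Qed.

Definition dst (pi : 'M[R]_(n, m)) (s : 'I_n) : R :=
  limn (series (fun t => gamma ^+ t * state_dist P rho pi t s)).

Lemma dst_cvg pi : is_policy pi -> forall s,
  cvgn (series (fun t => gamma ^+ t * state_dist P rho pi t s)).
Proof. by move=> hpi s; apply: (@gser_cvg _ _ 1) => // t; apply: sd_bnd. Qed.

Lemma dst_bnd pi : is_policy pi -> forall s, 0 <= dst pi s <= 1 / (1 - gamma).
Proof. by move=> hpi s; apply: (@gser_bounds _ _ 1) => // t; apply: sd_bnd. Qed.

Lemma dst_flow pi : is_policy pi -> forall s',
  dst pi s' = rho s' + gamma * \sum_s \sum_a dst pi s * pi s a * P s a s'.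
Proof.
move=> hpi s'; rewrite /dst.
rewrite (@gser_rec _ gamma _ _ (fun s => \sum_a pi s a * P s a s')
   (fun s t => state_dist P rho pi t s)).
- congr (_ + gamma * _); apply: eq_bigr => s _; rewrite mulr_suml.
  apply: eq_bigr => a _; ring.
- exact: dst_cvg.
- move=> t /=; apply: eq_bigr => s _; rewrite mulr_suml.
  apply: eq_bigr => a _; ring.
Qed.

Lemma occE pi : is_policy pi -> forall s a, occ P gamma rho pi s a = dst pi s * pi s a.
Proof.
move=> hpi s a; rewrite mxE; apply: cvg_lim => //.
have -> : series (fun t => gamma ^+ t * (state_dist P rho pi t s * pi s a)) =
  (fun N => series (fun t => gamma ^+ t * state_dist P rho pi t s) N * pi s a).
  apply: funext => N; rewrite !seriesEord /= mulr_suml; apply: eq_bigr => t _; ring.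
apply: cvgMl; exact: dst_cvg.
Qed.

Lemma dst_sum pi : is_policy pi -> (1 - gamma) * \sum_s dst pi s = 1.
Proof.
move=> hpi.
have E : \sum_s dst pi s = 1 + gamma * \sum_s dst pi s.
  rewrite [LHS](eq_bigr _ (fun s _ => dst_flow hpi s)).
  rewrite big_split /=; case: hrho => _ ->; congr (1 + _).
  rewrite -mulr_sumr; congr (gamma * _); rewrite exchange_big /=.
  apply: eq_bigr => s _; rewrite exchange_big /=; case: (hpi s) => _ h1.
  rewrite -[RHS]mulr1 -h1 mulr_sumr; apply: eq_bigr => a _.
  by rewrite -mulr_sumr; case: hP => _ ->; rewrite mulr1.
rewrite mulrBl mul1r {1}E; ring.
Qed.

Lemma dst_ge_rho pi : is_policy pi -> forall s, rho s <= dst pi s.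
Proof.
move=> hpi s; rewrite dst_flow // lerDl; apply: mulr_ge0; first by case/andP: hg.
apply: sumr_ge0 => s0 _; apply: sumr_ge0 => a _; apply: mulr_ge0.
  apply: mulr_ge0; [by case/andP: (dst_bnd hpi s0) | by case: (hpi s0)].
by case: hP.
Qed.

End MDPfacts.
Section Qfacts.
Variables (R : realType) (n m : nat) (P : 'I_n -> 'I_m -> 'I_n -> R) (gamma : R).
Hypothesis hP : is_kernel P.
Hypothesis hg : 0 <= gamma < 1.

Lemma sum_delta (I : finType) (i0 : I) (F : I -> R) :
  \sum_i ((i == i0)%:R * F i) = F i0.
Proof.
rewrite (bigD1 i0) //= eqxx mul1r big1 ?addr0 // => i hi.
by rewrite (negbTE hi) mul0r.
Qed.

Lemma sum_deltar (I : finType) (i0 : I) (F : I -> R) :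
  \sum_i (F i * (i0 == i)%:R) = F i0.
Proof.
rewrite (bigD1 i0) //= eqxx mulr1 big1 ?addr0 // => i hi.
by rewrite eq_sym (negbTE hi) mulr0.
Qed.

Lemma sa_fwd (pi : 'M[R]_(n, m)) t s a s'' a'' :
  sa_dist P pi s a t.+1 s'' a'' =
  \sum_s' \sum_a' sa_dist P pi s a t s' a' * P s' a' s'' * pi s'' a''.
Proof. by []. Qed.

Lemma sa_back (pi : 'M[R]_(n, m)) t : forall s a s'' a'',
  sa_dist P pi s a t.+1 s'' a'' =
  \sum_s1 \sum_a1 P s a s1 * pi s1 a1 * sa_dist P pi s1 a1 t s'' a''.
Proof.
elim: t => [|t IH] s a s'' a''.
  rewrite /=.
  transitivity (P s a s'' * pi s'' a'').
    under eq_bigr do under eq_bigr do rewrite -mulnb natrM -!mulrA.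
    under eq_bigr do rewrite -mulr_sumr sum_delta.
    by rewrite sum_delta.
  under eq_bigr do under eq_bigr do rewrite -mulnb natrM mulrA.
  under eq_bigr do rewrite sum_deltar.
  by rewrite sum_deltar.
rewrite [LHS]sa_fwd.
under eq_bigr do under eq_bigr do rewrite IH.
under eq_bigr do under eq_bigr do rewrite -mulrA mulr_suml.
under eq_bigr do under eq_bigr do under eq_bigr do rewrite mulr_suml.
under eq_bigr do rewrite exchange_big /=.
under eq_bigr do under eq_bigr do rewrite exchange_big /=.
rewrite exchange_big /=.
under eq_bigr do rewrite exchange_big /=.
apply: eq_bigr => s1 _; apply: eq_bigr => a1 _.
rewrite mulr_sumr; apply: eq_bigr => s' _.
rewrite mulr_sumr; apply: eq_bigr => a' _; ring.
Qed.

Definition yst (pi u : 'M[R]_(n, m)) t s a :=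
  \sum_s' \sum_a' sa_dist P pi s a t s' a' * u s' a'.

Lemma yst0 pi u s a : yst pi u 0 s a = u s a.
Proof.
rewrite /yst /=; under eq_bigr do under eq_bigr do rewrite -mulnb natrM -mulrA.
under eq_bigr do rewrite -mulr_sumr sum_delta.
by rewrite sum_delta.
Qed.

Lemma yst_back pi u t s a :
  yst pi u t.+1 s a = \sum_s1 \sum_a1 P s a s1 * pi s1 a1 * yst pi u t s1 a1.
Proof.
rewrite /yst; under eq_bigr do under eq_bigr do rewrite sa_back mulr_suml.
under eq_bigr do under eq_bigr do under eq_bigr do rewrite mulr_suml.
under eq_bigr do rewrite exchange_big /=.
under eq_bigr do under eq_bigr do rewrite exchange_big /=.
rewrite exchange_big /=.
under eq_bigr do rewrite exchange_big /=.
apply: eq_bigr => s1 _; apply: eq_bigr => a1 _.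
rewrite mulr_sumr; apply: eq_bigr => s' _.
rewrite mulr_sumr; apply: eq_bigr => a' _; ring.
Qed.

Lemma yst_bnd pi (u : 'M[R]_(n, m)) (B : R) : is_policy pi -> (forall s a, 0 <= u s a <= B) ->
  forall t s a, 0 <= yst pi u t s a <= B.
Proof.
move=> hpi hu; elim=> [|t IH] s a; first by rewrite yst0.
rewrite yst_back; apply/andP; split.
  apply: sumr_ge0 => s1 _; apply: sumr_ge0 => a1 _; apply: mulr_ge0.
    apply: mulr_ge0; [by case: hP | by case: (hpi s1)].
  by case/andP: (IH s1 a1).
apply: (@le_trans _ _ (\sum_s1 \sum_a1 P s a s1 * pi s1 a1 * B)).
  apply: ler_sum => s1 _; apply: ler_sum => a1 _; apply: ler_wpM2l.
    apply: mulr_ge0; [by case: hP | by case: (hpi s1)].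
  by case/andP: (IH s1 a1).
have -> : \sum_s1 \sum_a1 P s a s1 * pi s1 a1 * B = B; last by [].
transitivity (\sum_s1 P s a s1 * B).
  apply: eq_bigr => s1 _; case: (hpi s1) => _ h1.
  rewrite -[RHS]mulr1 -h1 mulr_sumr; apply: eq_bigr => a1 _; ring.
by rewrite -mulr_suml; case: hP => _ ->; rewrite mul1r.
Qed.

Lemma Qfun_bnd pi (u : 'M[R]_(n, m)) (B : R) : is_policy pi -> (forall s a, 0 <= u s a <= B) ->
  forall s a, 0 <= Qfun P gamma pi u s a <= B / (1 - gamma).
Proof.
move=> hpi hu s a; apply: gser_bounds => // t; exact: yst_bnd.
Qed.

Lemma Qfun_bell pi (u : 'M[R]_(n, m)) (B : R) : is_policy pi -> (forall s a, 0 <= u s a <= B) ->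
  forall s a, Qfun P gamma pi u s a =
    u s a + gamma * \sum_s1 \sum_a1 P s a s1 * pi s1 a1 * Qfun P gamma pi u s1 a1.
Proof.
move=> hpi hu s a.
rewrite /Qfun (@gser_rec _ gamma _ (fun t => yst pi u t s a)
   (fun p : 'I_n * 'I_m => P s a p.1 * pi p.1 p.2)
   (fun p t => yst pi u t p.1 p.2)).
- by rewrite yst0 pair_bigA.
- move=> p; apply: (@gser_cvg _ _ B) => // t; exact: yst_bnd.
- by move=> t; rewrite yst_back pair_bigA.
Qed.

End Qfacts.
Section PDL.
Variables (R : realType) (n m : nat) (P : 'I_n -> 'I_m -> 'I_n -> R) (rho : 'I_n -> R) (gamma : R).

Lemma pdl_alg (d' : 'I_n -> R) (pi' pi u : 'M[R]_(n, m)) (Q : 'I_n -> 'I_m -> R) :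
  (forall s', d' s' = rho s' + gamma * \sum_s \sum_a d' s * pi' s a * P s a s') ->
  (forall s a, Q s a = u s a + gamma * \sum_s1 \sum_a1 P s a s1 * pi s1 a1 * Q s1 a1) ->
  \sum_s \sum_a u s a * (d' s * pi' s a) =
  \sum_s d' s * \sum_a (pi' s a - pi s a) * Q s a +
  \sum_s rho s * \sum_a pi s a * Q s a.
Proof.
move=> hfl hbe.
pose V s1 := \sum_a1 pi s1 a1 * Q s1 a1.
have hS : forall s a, \sum_s1 \sum_a1 P s a s1 * pi s1 a1 * Q s1 a1 =
    \sum_s1 P s a s1 * V s1.
  by move=> s a; apply: eq_bigr => s1 _; rewrite /V mulr_sumr; apply: eq_bigr => a1 _; rewrite mulrA.
have hu : forall s a, u s a = Q s a - gamma * \sum_s1 P s a s1 * V s1.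
  by move=> s a; rewrite {1}hbe hS; ring.
have hT : \sum_s \sum_a (gamma * \sum_s1 P s a s1 * V s1) * (d' s * pi' s a) =
    \sum_s1 V s1 * (d' s1 - rho s1).
  transitivity (\sum_s \sum_a \sum_s1 V s1 * (gamma * (d' s * pi' s a * P s a s1))).
    apply: eq_bigr => s _; apply: eq_bigr => a _.
    rewrite mulr_sumr mulr_suml; apply: eq_bigr => s1 _; ring.
  under eq_bigr do rewrite exchange_big /=.
  rewrite exchange_big /=; apply: eq_bigr => s1 _.
  rewrite [in RHS](hfl s1) addrAC subrr add0r !mulr_sumr.
  apply: eq_bigr => s _; rewrite !mulr_sumr; apply: eq_bigr => a _; ring.
transitivity (\sum_s \sum_a Q s a * (d' s * pi' s a) -
   \sum_s \sum_a (gamma * \sum_s1 P s a s1 * V s1) * (d' s * pi' s a)).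
  rewrite -sumrB; apply: eq_bigr => s _; rewrite -sumrB; apply: eq_bigr => a _.
  by rewrite hu mulrBl.
rewrite hT -sumrB -big_split /=; apply: eq_bigr => s _.
under [X in _ = _ * X + _]eq_bigr do rewrite mulrBl.
rewrite sumrB /V.
have -> : \sum_a Q s a * (d' s * pi' s a) = d' s * \sum_a pi' s a * Q s a.
  by rewrite mulr_sumr; apply: eq_bigr => a _; ring.
ring.
Qed.
End PDL.
Section MDP2.
Variables (R : realType) (n m : nat) (P : 'I_n -> 'I_m -> 'I_n -> R) (rho : 'I_n -> R) (gamma : R).
Hypothesis hP : is_kernel P.
Hypothesis hrho : is_distr rho.
Hypothesis hg : 0 <= gamma < 1.

Local Notation dst := (dst P rho gamma).

Lemma mx_subE (A B : 'M[R]_(n, m)) s a : (A - B) s a = A s a - B s a.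
Proof. by rewrite !mxE. Qed.

Lemma mx_addE (A B : 'M[R]_(n, m)) s a : (A + B) s a = A s a + B s a.
Proof. by rewrite !mxE. Qed.

Lemma mx_scaleE (c : R) (A : 'M[R]_(n, m)) s a : (c *: A) s a = c * A s a.
Proof. by rewrite !mxE. Qed.

Lemma pdl (pi' pi u : 'M[R]_(n, m)) (B : R) : is_policy pi' -> is_policy pi ->
  (forall s a, 0 <= u s a <= B) ->
  frob_inner u (occ P gamma rho pi' - occ P gamma rho pi) =
  \sum_s dst pi' s * \sum_a (pi' s a - pi s a) * Qfun P gamma pi u s a.
Proof.
move=> hpi' hpi hu.
have E : forall p, is_policy p -> \sum_s \sum_a u s a * (dst p s * p s a) =
   \sum_s dst p s * \sum_a (p s a - pi s a) * Qfun P gamma pi u s a +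
   \sum_s rho s * \sum_a pi s a * Qfun P gamma pi u s a.
  move=> p hp; apply: pdl_alg; first exact: dst_flow.
  move=> s a; exact: (Qfun_bell hP hg hpi hu).
rewrite /frob_inner.
transitivity (\sum_s \sum_a u s a * (dst pi' s * pi' s a) -
              \sum_s \sum_a u s a * (dst pi s * pi s a)).
  rewrite -sumrB; apply: eq_bigr => s _; rewrite -sumrB; apply: eq_bigr => a _.
  by rewrite mx_subE !occE // mulrBr.
rewrite (E _ hpi') (E _ hpi).
have -> : \sum_s dst pi s * \sum_a (pi s a - pi s a) * Qfun P gamma pi u s a = 0.
  by apply: big1 => s _; rewrite big1 ?mulr0 // => a _; rewrite subrr mul0r.
ring.
Qed.

Lemma flow_uniq (pi : 'M[R]_(n, m)) (e : 'I_n -> R) : is_policy pi ->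
  (forall s', e s' = gamma * \sum_s \sum_a e s * pi s a * P s a s') ->
  forall s, e s = 0.
Proof.
move=> hpi he.
have hS : \sum_s `|e s| <= gamma * \sum_s `|e s|.
  apply: (@le_trans _ _ (\sum_s' gamma * \sum_s \sum_a `|e s| * pi s a * P s a s')).
    apply: ler_sum => s' _; rewrite {1}he normrM ger0_norm; last by case/andP: hg.
    apply: ler_wpM2l; first by case/andP: hg.
    apply: (le_trans (ler_norm_sum _ _ _)); apply: ler_sum => s _.
    apply: (le_trans (ler_norm_sum _ _ _)); apply: ler_sum => a _.
    rewrite !normrM (ger0_norm (_ : 0 <= pi s a)); last by case: (hpi s).
    by rewrite (ger0_norm (_ : 0 <= P s a s')) //; case: hP.
  rewrite -mulr_sumr; apply: ler_wpM2l; first by case/andP: hg.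
  rewrite exchange_big /=; apply: ler_sum => s _.
  rewrite exchange_big /=; case: (hpi s) => _ h1.
  rewrite [leRHS](_ : _ = `|e s| * \sum_a pi s a); last by rewrite h1 mulr1.
  rewrite mulr_sumr; apply: ler_sum => a _; rewrite -mulr_sumr.
  by case: hP => _ ->; rewrite mulr1.
have hS0 : \sum_s `|e s| = 0.
  apply/eqP; rewrite eq_le (sumr_ge0 _ (fun s _ => normr_ge0 (e s))) andbT.
  have : (1 - gamma) * \sum_s `|e s| <= 0 by rewrite mulrBl mul1r subr_le0.
  rewrite pmulr_rle0 // subr_gt0; by case/andP: hg.
move=> s; apply/eqP; rewrite -normr_eq0 eq_le normr_ge0 andbT -hS0.
rewrite (bigD1 s) //= lerDl; apply: sumr_ge0 => *; exact: normr_ge0.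
Qed.

End MDP2.
Section Mix.
Variables (R : realType) (n m : nat) (P : 'I_n -> 'I_m -> 'I_n -> R) (rho : 'I_n -> R) (gamma : R).
Hypothesis hP : is_kernel P.
Hypothesis hrho : is_distr rho.
Hypothesis hg : 0 <= gamma < 1.
Hypothesis hrho0 : forall s, 0 < rho s.

Local Notation dst := (dst P rho gamma).

Definition wmix (al : R) (pi1 pi2 : 'M[R]_(n, m)) s := al * dst pi1 s + (1 - al) * dst pi2 s.
Definition mixpol (al : R) (pi1 pi2 : 'M[R]_(n, m)) : 'M[R]_(n, m) :=
  \matrix_(s, a) ((al * dst pi1 s * pi1 s a + (1 - al) * dst pi2 s * pi2 s a) / wmix al pi1 pi2 s).

Variables (pi1 pi2 : 'M[R]_(n, m)) (al : R).
Hypothesis hpi1 : is_policy pi1.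
Hypothesis hpi2 : is_policy pi2.
Hypothesis hal : 0 <= al <= 1.

Lemma wmix_ge s : rho s <= wmix al pi1 pi2 s.
Proof.
case/andP: hal => h0 h1.
rewrite /wmix (@le_trans _ _ (al * rho s + (1 - al) * rho s)) //; first by rewrite -mulrDl addrC subrK mul1r.
apply: lerD; apply: ler_wpM2l; rewrite ?subr_ge0 //; exact: dst_ge_rho.
Qed.

Lemma wmix_gt0 s : 0 < wmix al pi1 pi2 s.
Proof. exact: lt_le_trans (hrho0 s) (wmix_ge s). Qed.

Lemma wmix_mul s a : wmix al pi1 pi2 s * mixpol al pi1 pi2 s a =
  al * dst pi1 s * pi1 s a + (1 - al) * dst pi2 s * pi2 s a.
Proof.
rewrite mxE [LHS]mulrC divfK //; exact: lt0r_neq0 (wmix_gt0 s).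
Qed.

Lemma mix_policy : is_policy (mixpol al pi1 pi2).
Proof.
case/andP: hal => h0 h1.
move=> s; split.
  move=> a; rewrite mxE; apply: divr_ge0; last exact: ltW (wmix_gt0 s).
  apply: addr_ge0; apply: mulr_ge0; try apply: mulr_ge0; rewrite ?subr_ge0 //;
    by [case/andP: (dst_bnd hP hrho hg hpi1 s) | case/andP: (dst_bnd hP hrho hg hpi2 s)
       | case: (hpi1 s) | case: (hpi2 s)].
apply: (mulfI (lt0r_neq0 (wmix_gt0 s))); rewrite mulr1 mulr_sumr.
under eq_bigr do rewrite wmix_mul.
rewrite big_split /= -!mulr_sumr.
by case: (hpi1 s) => _ ->; case: (hpi2 s) => _ ->; rewrite /wmix !mulr1.
Qed.

Lemma mix_dst s : dst (mixpol al pi1 pi2) s = wmix al pi1 pi2 s.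
Proof.
have hpm := mix_policy.
have hw : forall s', wmix al pi1 pi2 s' = rho s' + gamma * \sum_s \sum_a
    wmix al pi1 pi2 s * mixpol al pi1 pi2 s a * P s a s'.
  move=> s'; under eq_bigr do under eq_bigr do rewrite wmix_mul.
  rewrite (_ : \sum_s \sum_a _ = al * \sum_s \sum_a dst pi1 s * pi1 s a * P s a s' +
     (1 - al) * \sum_s \sum_a dst pi2 s * pi2 s a * P s a s'); last first.
    rewrite !mulr_sumr -big_split /=; apply: eq_bigr => s0 _.
    rewrite !mulr_sumr -big_split /=; apply: eq_bigr => a _; ring.
  rewrite /wmix [in LHS](dst_flow hP hrho hg hpi1) [in LHS](dst_flow hP hrho hg hpi2).
  ring.
apply/eqP; rewrite -subr_eq0; apply/eqP.
apply: (@flow_uniq _ _ _ P gamma hP hg (mixpol al pi1 pi2) (fun s => dst (mixpol al pi1 pi2) s - wmix al pi1 pi2 s)) => // s'.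
rewrite (dst_flow hP hrho hg hpm) hw.
rewrite (_ : forall x y z : R, (x + y) - (x + z) = y - z); last by move=> *; ring.
rewrite -mulrBr -sumrB; congr (gamma * _); apply: eq_bigr => s0 _.
rewrite -sumrB; apply: eq_bigr => a _; ring.
Qed.

Lemma mix_occ : occ P gamma rho (mixpol al pi1 pi2) =
  al *: occ P gamma rho pi1 + (1 - al) *: occ P gamma rho pi2.
Proof.
apply/matrixP => s a.
rewrite mx_addE !mx_scaleE !occE //; last exact: mix_policy.
by rewrite mix_dst wmix_mul !mulrA.
Qed.

Lemma mix_diff s a : mixpol al pi1 pi2 s a - pi2 s a =
  al * dst pi1 s * (pi1 s a - pi2 s a) / wmix al pi1 pi2 s.
Proof.
have hw := lt0r_neq0 (wmix_gt0 s).
apply: (mulfI hw); rewrite mulrBr wmix_mul [RHS]mulrC divfK // /wmix; ring.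
Qed.

End Mix.
Section Anal.
Variable R : realType.

Lemma diff_eps (V : normedModType R) (f : V -> R) (x : V) :
  differentiable f x -> forall eps, 0 < eps ->
  exists2 del, 0 < del & forall v, `|v| < del ->
    `|f (x + v) - f x - 'd f x v| <= eps * `|v|.
Proof.
move=> df eps he.
have /eqaddoP H := diff_locally df.
have /nbhs_norm0P [del hdel hPd] := H eps he.
exists del => // v hv; have := hPd v hv.
by rewrite !fctE /= [v + x]addrC opprD addrA.
Qed.

Lemma diff_frob (n m : nat) (f : 'M[R]_(n, m) -> R) (mu : 'M[R]_(n, m)) :
  differentiable f mu -> forall v, 'd f mu v = frob_inner (grad f mu) v.
Proof.
move=> df v; rewrite /frob_inner /grad {1}(matrix_sum_delta v) linear_sum.
apply: eq_bigr => s _; rewrite linear_sum; apply: eq_bigr => a _.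
by rewrite linearZ /= mxE deriveE // mulrC.
Qed.

Lemma mx_norm_le (n m : nat) (v : 'M[R]_(n, m)) (c : R) : 0 <= c ->
  (forall s a, `|v s a| <= c) -> `|v| <= c.
Proof.
move=> c0 hv; rewrite [`|v|]/Num.norm /= mx_normrE.
by apply: bigmax_le => // -[s a] _; apply: hv.
Qed.

Lemma mx_norm_le_entry (n m : nat) (v : 'M[R]_(n, m)) s a : `|v s a| <= `|v|.
Proof.
rewrite [`|v|]/Num.norm /= mx_normrE.
exact: (@le_bigmax _ _ _ 0 (fun ij : 'I_n * 'I_m => `|v ij.1 ij.2|) (s, a)).
Qed.

End Anal.
Section Num1.
Variable R : realType.
Lemma frac_le (x c : R) : 0 <= x -> 0 <= c -> x / (2 * (c + 1)) * c <= x / 2.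
Proof.
move=> x0 c0; rewrite -subr_ge0.
have hc : c + 1 != 0 by rewrite lt0r_neq0 // ltr_wpDl.
have -> : x / 2 - x / (2 * (c + 1)) * c = x / (2 * (c + 1)).
  by field.
by apply: divr_ge0 => //; apply: mulr_ge0 => //; apply: addr_ge0.
Qed.
End Num1.
Section GI.
Variables (R : realType) (n m : nat) (P : 'I_n -> 'I_m -> 'I_n -> R) (rho : 'I_n -> R) (gamma : R).
Variables (F : 'M[R]_(n, m) -> R) (U L : R).
Hypothesis hP : is_kernel P.
Hypothesis hrho : is_distr rho.
Hypothesis hg : 0 <= gamma < 1.
Hypothesis hdiff : forall mu, occ_set P gamma rho mu -> differentiable F mu.
Hypothesis hU : forall p, is_policy p -> forall s a,
     0 <= pseudo_reward P F gamma rho p s a <= U.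
Hypothesis hL : 0 < L.
Hypothesis hsm : forall p p', is_policy p -> is_policy p' ->
     `| Gobj P F gamma rho p - Gobj P F gamma rho p'
        - frob_inner (grad (Gobj P F gamma rho) p') (p - p') |
     <= L / 2 * sqnorm2 (p - p').

Local Notation dst := (dst P rho gamma).

Lemma frob_delta (X : 'M[R]_(n, m)) s0 a0 : frob_inner (delta_mx s0 a0) X = X s0 a0.
Proof.
rewrite /frob_inner; under eq_bigr do under eq_bigr do rewrite mxE -mulnb natrM -mulrA.
under eq_bigr do rewrite -mulr_sumr sum_delta.
by rewrite sum_delta.
Qed.

Lemma frobZ (g e : 'M[R]_(n, m)) (c : R) : frob_inner g (c *: e) = c * frob_inner g e.
Proof.
rewrite /frob_inner mulr_sumr; apply: eq_bigr => s _; rewrite mulr_sumr.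
by apply: eq_bigr => a _; rewrite mxE; ring.
Qed.

Lemma sqnormZ (e : 'M[R]_(n, m)) (c : R) : sqnorm2 (c *: e) = c ^+ 2 * sqnorm2 e.
Proof.
rewrite /sqnorm2 /frob_inner mulr_sumr; apply: eq_bigr => s _; rewrite mulr_sumr.
by apply: eq_bigr => a _; rewrite mxE; ring.
Qed.

Lemma sum_bnd (d : 'I_n -> R) (x q : 'I_n -> 'I_m -> R) (D Qb : R) :
  0 <= Qb -> (forall s, 0 <= d s <= D) -> (forall s a, `|q s a| <= Qb) ->
  `|\sum_s d s * \sum_a x s a * q s a| <= D * Qb * \sum_s \sum_a `|x s a|.
Proof.
move=> hQ hd hq.
apply: (le_trans (ler_norm_sum _ _ _)).
rewrite mulr_sumr; apply: ler_sum => s _.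
have [d0 dD] := andP (hd s).
rewrite normrM (ger0_norm d0) -mulrA.
have hY : `|\sum_a x s a * q s a| <= Qb * \sum_a `|x s a|.
  apply: (le_trans (ler_norm_sum _ _ _)); rewrite mulr_sumr; apply: ler_sum => a _.
  by rewrite normrM mulrC; apply: ler_wpM2r => //.
apply: (le_trans (ler_wpM2l d0 hY)); apply: ler_wpM2r => //.
apply: mulr_ge0 => //; apply: sumr_ge0 => *; exact: normr_ge0.
Qed.

Lemma pol_comb (p q : 'M[R]_(n, m)) (h : R) : is_policy p -> is_policy q -> 0 <= h <= 1 ->
  is_policy (p + h *: (q - p)).
Proof.
move=> hp hq /andP[h0 h1] s; split.
  move=> a; rewrite mx_addE mx_scaleE mx_subE.
  rewrite (_ : p s a + h * (q s a - p s a) = (1 - h) * p s a + h * q s a); last by ring.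
  apply: addr_ge0; apply: mulr_ge0; rewrite ?subr_ge0 //; by [case: (hp s) | case: (hq s)].
under eq_bigr do rewrite mx_addE mx_scaleE mx_subE.
rewrite big_split /= -mulr_sumr sumrB.
by case: (hp s) => _ ->; case: (hq s) => _ ->; rewrite subrr mulr0 addr0.
Qed.

Lemma occ_lip (pi ph : 'M[R]_(n, m)) : is_policy pi -> is_policy ph ->
  forall s0 a0, `|occ P gamma rho ph s0 a0 - occ P gamma rho pi s0 a0| <=
    1 / (1 - gamma) * (1 / (1 - gamma)) * \sum_s \sum_a `|ph s a - pi s a|.
Proof.
move=> hpi hph s0 a0.
have hd01 : forall s a, 0 <= (delta_mx s0 a0 : 'M[R]_(n, m)) s a <= 1.
  by move=> s a; rewrite mxE ler0n lern1 leq_b1.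
rewrite -mx_subE -frob_delta (pdl hP hrho hg hph hpi hd01).
have hg1 : 0 < 1 - gamma by rewrite subr_gt0; case/andP: hg.
apply: sum_bnd.
- by rewrite divr_ge0 // ltW.
- exact: dst_bnd.
- move=> s a; have /andP[q0 q1] := Qfun_bnd hP hg hpi hd01 s a.
  by rewrite ger0_norm.
Qed.

Lemma dst_diff (pi ph : 'M[R]_(n, m)) : is_policy pi -> is_policy ph -> forall s,
  dst ph s - dst pi s = \sum_a (occ P gamma rho ph s a - occ P gamma rho pi s a).
Proof.
move=> hpi hph s; rewrite sumrB.
under eq_bigr do rewrite occE //.
under [X in _ = _ - X]eq_bigr do rewrite occE //.
by rewrite -!mulr_sumr; case: (hpi s) => _ ->; case: (hph s) => _ ->; rewrite !mulr1.
Qed.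

Lemma GI (pi pb : 'M[R]_(n, m)) : is_policy pi -> is_policy pb ->
  frob_inner (grad (Gobj P F gamma rho) pi) (pb - pi) =
  \sum_s dst pi s * \sum_a (pb s a - pi s a) *
     Qfun P gamma pi (pseudo_reward P F gamma rho pi) s a.
Proof.
move=> hpi hpb.
set g := grad _ pi; set Q := Qfun _ _ _ _; set e := pb - pi.
have hg1 : 0 < 1 - gamma by rewrite subr_gt0; case/andP: hg.
set Cl := 1 / (1 - gamma) * (1 / (1 - gamma)) * \sum_s \sum_a `|e s a|.
have Cl0 : 0 <= Cl.
  apply: mulr_ge0; first by apply: mulr_ge0; rewrite divr_ge0 // ltW.
  by apply: sumr_ge0 => s _; apply: sumr_ge0 => a _; exact: normr_ge0.
set X := fun s => \sum_a e s a * Q s a.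
set C' := m%:R * Cl * \sum_s `|X s|.
have C'0 : 0 <= C'.
  by apply: mulr_ge0; [apply: mulr_ge0 | apply: sumr_ge0 => s _; exact: normr_ge0].
have sq0 : 0 <= sqnorm2 e.
  by apply: sumr_ge0 => s _; apply: sumr_ge0 => a _; rewrite -expr2 sqr_ge0.
set K := L / 2 * sqnorm2 e + C'.
have K0 : 0 <= K by rewrite addr_ge0 // mulr_ge0 // divr_ge0 // ltW.
set S := \sum_s dst pi s * X s.
have -> : \sum_s dst pi s * \sum_a (pb s a - pi s a) * Q s a = S.
  by apply: eq_bigr => s _; congr (_ * _); apply: eq_bigr => a _; rewrite mx_subE.
suff key : forall eps, 0 < eps -> `|frob_inner g e - S| <= eps.
  apply/eqP; rewrite -subr_eq0 -normr_eq0 eq_le normr_ge0 andbT.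
  by apply/ler_addgt0Pr => eps he; rewrite add0r; exact: key.
move=> eps he.
set eps' := eps / (2 * (Cl + 1)).
have he' : 0 < eps' by rewrite divr_gt0 // mulr_gt0 // ltr_wpDl.
have hocc : occ_set P gamma rho (occ P gamma rho pi) by exists pi.
have [del hdel hD] := diff_eps (hdiff hocc) he'.
set h := Num.min 1 (Num.min (del / (2 * (Cl + 1))) (eps / (2 * (K + 1)))).
have h0 : 0 < h.
  rewrite !lt_min ltr01 /= !divr_gt0 // ?mulr_gt0 // ?ltr_wpDl //.
have h1 : h <= 1 by rewrite ge_min lexx.
have hhd : h * Cl < del.
  apply: (@le_lt_trans _ _ (del / (2 * (Cl + 1)) * Cl)).
    apply: ler_wpM2r => //; rewrite ge_min; apply/orP; right; rewrite ge_min lexx //.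
  apply: (le_lt_trans (frac_le (ltW hdel) Cl0)).
  by rewrite ltr_pdivrMr // ltr_pMr // ltr1n.
have hhK : h * K <= eps / 2.
  apply: (@le_trans _ _ (eps / (2 * (K + 1)) * K)); last exact: frac_le (ltW he) K0.
  apply: ler_wpM2r => //; rewrite ge_min; apply/orP; right; rewrite ge_min lexx orbT //.
have hh01 : 0 <= h <= 1 by rewrite (ltW h0) h1.
have hph := pol_comb hpi hpb hh01.
set ph := pi + h *: (pb - pi).
have hphe : forall s a, ph s a - pi s a = h * e s a.
  by move=> s a; rewrite mx_addE mx_scaleE; ring.
have hv : `|occ P gamma rho ph - occ P gamma rho pi| <= h * Cl.
  apply: mx_norm_le; first exact: mulr_ge0 (ltW h0) Cl0.
  move=> s a; rewrite mx_subE; apply: (le_trans (occ_lip hpi hph s a)).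
  rewrite /Cl [leRHS]mulrCA; apply: ler_wpM2l; first by apply: mulr_ge0; rewrite divr_ge0 // ltW.
  rewrite mulr_sumr; apply: ler_sum => s0 _; rewrite mulr_sumr; apply: ler_sum => a0 _.
  by rewrite hphe normrM (ger0_norm (ltW h0)).
have hdF := hD _ (le_lt_trans hv hhd).
rewrite (_ : occ P gamma rho pi + _ = occ P gamma rho ph) in hdF; last by rewrite addrC subrK.
rewrite diff_frob in hdF; last exact: hdiff.
rewrite -/(pseudo_reward P F gamma rho pi) in hdF.
rewrite (pdl hP hrho hg hph hpi (hU hpi)) in hdF.
set Y := \sum_s dst ph s * X s.
have hYe : \sum_s dst ph s * \sum_a (ph s a - pi s a) * Q s a = h * Y.
  rewrite mulr_sumr; apply: eq_bigr => s _; rewrite mulrCA; congr (_ * _).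
  by rewrite mulr_sumr; apply: eq_bigr => a _; rewrite hphe mulrA.
rewrite hYe in hdF.
have hsm1 := hsm hph hpi.
rewrite (_ : ph - pi = h *: e) in hsm1; last by rewrite /ph [pi + _]addrC addrK.
rewrite frobZ sqnormZ /Gobj in hsm1.
have hYS : `|Y - S| <= h * C'.
  rewrite /Y /S -sumrB.
  apply: (le_trans (ler_norm_sum _ _ _)).
  rewrite /C' !mulr_sumr; apply: ler_sum => s _.
  rewrite -mulrBl normrM !mulrA; apply: ler_wpM2r; first exact: normr_ge0.
  rewrite (dst_diff hpi hph).
  apply: (le_trans (ler_norm_sum _ _ _)).
  apply: (@le_trans _ _ (\sum_(a < m) h * Cl)).
    apply: ler_sum => a _; rewrite -mx_subE.
    exact: le_trans (mx_norm_le_entry _ _ _) hv.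
  rewrite sumr_const card_ord le_eqVlt -mulr_natr /Cl; apply/orP; left; apply/eqP; ring.
set a := F (occ P gamma rho ph) - F (occ P gamma rho pi).
have hdF' : `|a - h * Y| <= eps' * (h * Cl).
  exact: le_trans hdF (ler_wpM2l (ltW he') hv).
have H1 : `|h * frob_inner g e - h * S| <= h * (h * K + eps' * Cl).
  have -> : h * frob_inner g e - h * S =
     - (a - h * frob_inner g e) + (a - h * Y) + h * (Y - S) by ring.
  apply: le_trans (ler_normD _ _) _.
  apply: le_trans (lerD (ler_normD _ _) (lexx _)) _.
  rewrite normrN normrM (ger0_norm (ltW h0)).
  apply: le_trans (lerD (lerD hsm1 hdF') (ler_wpM2l (ltW h0) hYS)) _.
  rewrite le_eqVlt /K; apply/orP; left; apply/eqP; ring.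
rewrite -mulrBr normrM (ger0_norm (ltW h0)) ler_pM2l // in H1.
apply: le_trans H1 _; rewrite [leRHS]splitr; apply: lerD hhK _.
exact: frac_le (ltW he) Cl0.
Qed.

End GI.
Section Num2.
Variable R : realType.
Lemma num_key (x y al rh : R) : 0 < rh -> rh <= x -> rh <= y -> 0 <= al <= 1 ->
  (1 + x / rh) * (y / (al * y + (1 - al) * x)) ^+ 2 <= 3 * (y ^+ 2 / rh ^+ 2) + 4 * (x / rh).
Proof.
move=> r0 rx ry /andP[a0 a1].
set w := al * y + (1 - al) * x.
have wr : rh <= w.
  rewrite /w (@le_trans _ _ (al * rh + (1 - al) * rh)) //; first by rewrite -mulrDl addrC subrK mul1r.
  by apply: lerD; apply: ler_wpM2l; rewrite ?subr_ge0.
have w0 : 0 < w by exact: lt_le_trans r0 wr.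
have y0 : 0 <= y by exact: le_trans (ltW r0) ry.
have x0 : 0 <= x by exact: le_trans (ltW r0) rx.
set r := y / w.
have r0' : 0 <= r by rewrite divr_ge0 // ltW.
have rw : r * w = y by rewrite /r divfK // lt0r_neq0.
have ryr : r <= y / rh by rewrite /r ler_pdivrMr // mulrAC ler_pdivlMr // ler_wpM2l.
have h1 : r ^+ 2 <= y ^+ 2 / rh ^+ 2.
  by rewrite -expr_div_n; apply: lerXn2r; rewrite ?nnegrE // divr_ge0 // ltW.
have h2 : x * r ^+ 2 <= 2 * (y ^+ 2 / rh) + 4 * x.
  have [alh|alh] := leP al (1 / 2).
    have xw : x <= 2 * w.
      rewrite /w; nra.
    have : x * r ^+ 2 <= 2 * w * r ^+ 2 by apply: ler_wpM2r => //; rewrite sqr_ge0.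
    move=> H; apply: le_trans H _.
    rewrite expr2 mulrA -[2 * w * r]mulrA [w * r]mulrC rw.
    have : 2 * y * r <= 2 * y * (y / rh) by apply: ler_wpM2l => //; rewrite mulr_ge0.
    move=> H; apply: le_trans H _.
    rewrite -[leLHS]addr0 lerD //; last by rewrite mulr_ge0.
    by rewrite le_eqVlt; apply/orP; left; apply/eqP; rewrite expr2; ring.
  have yw : y <= 2 * w by rewrite /w; nra.
  have r2 : r <= 2 by rewrite /r ler_pdivrMr // mulrC.
  have : r ^+ 2 <= 4.
    rewrite (_ : 4 = 2 ^+ 2 :> R); last by rewrite expr2; ring.
    by apply: lerXn2r; rewrite ?nnegrE.
  move=> H; apply: le_trans (ler_wpM2l x0 H) _.
  rewrite mulrC -[leLHS]add0r lerD //; apply: mulr_ge0 => //.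
  by rewrite divr_ge0 ?sqr_ge0 // ltW.
have h3 : x * r ^+ 2 / rh <= (2 * (y ^+ 2 / rh) + 4 * x) / rh.
  by rewrite ler_pM2r // invr_gt0.
have rn : rh != 0 by rewrite lt0r_neq0.
have -> : (1 + x / rh) * r ^+ 2 = r ^+ 2 + x * r ^+ 2 / rh by field.
have -> : 3 * (y ^+ 2 / rh ^+ 2) + 4 * (x / rh) =
   y ^+ 2 / rh ^+ 2 + (2 * (y ^+ 2 / rh) + 4 * x) / rh by field.
exact: lerD.
Qed.
End Num2.
Section Proj.
Variables (R : realType) (m : nat).

Lemma sq_expand (x z Q : 'I_m -> R) (eta : R) :
  \sum_a (z a - (x a + eta * Q a)) ^+ 2 =
  \sum_a (z a - x a) ^+ 2 - 2 * eta * \sum_a (z a - x a) * Q a + eta ^+ 2 * \sum_a Q a ^+ 2.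
Proof.
rewrite !mulr_sumr -sumrB -big_split /=; apply: eq_bigr => a _; ring.
Qed.

Lemma proj_ineq (x q p Q : 'I_m -> R) (eta D : R) : 0 < eta -> 0 <= D ->
  \sum_a (q a - (x a + eta * Q a)) ^+ 2 <= \sum_a (p a - (x a + eta * Q a)) ^+ 2 ->
  D * \sum_a (p a - x a) * Q a - D / (2 * eta) * \sum_a (p a - x a) ^+ 2 <=
  D * \sum_a (q a - x a) * Q a - D / (2 * eta) * \sum_a (q a - x a) ^+ 2.
Proof.
move=> he hD; rewrite !sq_expand lerD2r.
have en : eta != 0 by rewrite lt0r_neq0.
move: (\sum_a (q a - x a) ^+ 2) (\sum_a (p a - x a) ^+ 2) (\sum_a (q a - x a) * Q a)
  (\sum_a (p a - x a) * Q a) => Aq Ap Bq Bp H.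
have c0 : 0 <= D / (2 * eta) by rewrite divr_ge0 // mulr_ge0 // ltW.
have H' := ler_wpM2l c0 H.
rewrite -subr_ge0; rewrite -subr_ge0 in H'.
have -> : D * Bq - D / (2 * eta) * Aq - (D * Bp - D / (2 * eta) * Ap) =
   D / (2 * eta) * (Ap - 2 * eta * Bp) - D / (2 * eta) * (Aq - 2 * eta * Bq).
  by field.
exact: H'.
Qed.
End Proj.
Section Main.
Variables (R : realType) (n m : nat) (P : 'I_n -> 'I_m -> 'I_n -> R) (rho : 'I_n -> R) (gamma : R).
Variables (F : 'M[R]_(n, m) -> R) (rho_min U L : R) (pistar : 'M[R]_(n, m)) (pi : nat -> 'M[R]_(n, m)).
Hypothesis hP : is_kernel P.
Hypothesis hrho : is_distr rho.
Hypothesis hg : 0 <= gamma < 1.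
Hypothesis hconc : forall mu1 mu2 (t : R), occ_set P gamma rho mu1 -> occ_set P gamma rho mu2 ->
     0 <= t <= 1 ->
     t * F mu1 + (1 - t) * F mu2 <= F (t *: mu1 + (1 - t) *: mu2).
Hypothesis hdiff : forall mu, occ_set P gamma rho mu -> differentiable F mu.
Hypothesis hrm : 0 < rho_min.
Hypothesis hrmin : forall s, rho_min <= rho s.
Hypothesis hU : forall p, is_policy p -> forall s a,
     0 <= pseudo_reward P F gamma rho p s a <= U.
Hypothesis hL : 0 < L.
Hypothesis hsm : forall p p', is_policy p -> is_policy p' ->
     `| Gobj P F gamma rho p - Gobj P F gamma rho p'
        - frob_inner (grad (Gobj P F gamma rho) p') (p - p') |
     <= L / 2 * sqnorm2 (p - p').
Hypothesis hps : is_policy pistar.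
Hypothesis hp0 : is_policy (pi 0%N).
Hypothesis hstep : forall k, pqa_step P F gamma rho (rho_min / L) (pi k) (pi k.+1).

Local Notation dst := (dst P rho gamma).
Local Notation G := (Gobj P F gamma rho).

Lemma hrho0 s : 0 < rho s.
Proof. exact: lt_le_trans hrm (hrmin s). Qed.

Lemma pol_k k : is_policy (pi k).
Proof. by case: k => [|k] // s; case: (hstep k s). Qed.

Lemma simplex_le1 (p : 'I_m -> R) : in_simplex p -> forall a, p a <= 1.
Proof.
move=> [h0 h1] a; rewrite -h1 (bigD1 a) //= lerDl; apply: sumr_ge0 => *; exact: h0.
Qed.

Lemma sq_simplex (p q : 'I_m -> R) : in_simplex p -> in_simplex q ->
  \sum_a (p a - q a) ^+ 2 <= 2.
Proof.
move=> hp hq; apply: (@le_trans _ _ (\sum_a (p a + q a))).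
  apply: ler_sum => a _.
  have p0 := proj1 hp a; have q0 := proj1 hq a.
  have p1 := simplex_le1 hp a; have q1 := simplex_le1 hq a.
  nra.
by rewrite big_split /= (proj2 hp) (proj2 hq).
Qed.

Definition Mc := L * (3 / ((1 - gamma) ^+ 2 * rho_min ^+ 2) + 4 / ((1 - gamma) * rho_min)).

Lemma dst_sum' p : is_policy p -> \sum_s dst p s = 1 / (1 - gamma).
Proof.
move=> hp; have := dst_sum hP hrho hg hp => E.
have hn : 1 - gamma != 0 by rewrite lt0r_neq0 // subr_gt0; case/andP: hg.
by apply: (mulfI hn); rewrite E; field.
Qed.

Lemma cost_bnd k al : 0 <= al <= 1 ->
  L / 2 * sqnorm2 (mixpol P rho gamma al pistar (pi k) - pi k) +
  \sum_s dst (pi k) s / (2 * (rho_min / L)) *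
     \sum_a (mixpol P rho gamma al pistar (pi k) s a - pi k s a) ^+ 2
  <= al ^+ 2 * Mc.
Proof.
move=> hal.
have hpk := pol_k k.
have hg1 : 0 < 1 - gamma by rewrite subr_gt0; case/andP: hg.
set pb := mixpol P rho gamma al pistar (pi k).
have -> : sqnorm2 (pb - pi k) = \sum_s \sum_a (pb s a - pi k s a) ^+ 2.
  by apply: eq_bigr => s _; apply: eq_bigr => a _; rewrite mx_subE expr2.
rewrite mulr_sumr -big_split /=.
set y := dst pistar; set x := dst (pi k).
have hterm : forall s, L / 2 * \sum_a (pb s a - pi k s a) ^+ 2 +
    x s / (2 * (rho_min / L)) * \sum_a (pb s a - pi k s a) ^+ 2 <=
    L * al ^+ 2 * (3 * (y s ^+ 2 / rho_min ^+ 2) + 4 * (x s / rho_min)).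
  move=> s.
  have hw := wmix_gt0 hP hrho hg hrho0 hps hpk hal s.
  have -> : \sum_a (pb s a - pi k s a) ^+ 2 =
     (al * y s / wmix P rho gamma al pistar (pi k) s) ^+ 2 * \sum_a (pistar s a - pi k s a) ^+ 2.
    rewrite mulr_sumr; apply: eq_bigr => a _.
    rewrite (mix_diff hP hrho hg hrho0 hps hpk hal); rewrite /y.
    by field; rewrite lt0r_neq0.
  have S2 := sq_simplex (hps s) (hpk s).
  have xr : rho_min <= x s := le_trans (hrmin s) (dst_ge_rho hP hrho hg hpk s).
  have yr : rho_min <= y s := le_trans (hrmin s) (dst_ge_rho hP hrho hg hps s).
  have nk := num_key hrm xr yr hal.
  move: S2; set S := \sum_a _ => S2.
  have hwn : wmix P rho gamma al pistar (pi k) s != 0 by rewrite lt0r_neq0.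
  have hrn : rho_min != 0 by rewrite lt0r_neq0.
  have hLn : L != 0 by rewrite lt0r_neq0.
  rewrite (_ : _ + _ = L * al ^+ 2 * ((1 + x s / rho_min) *
      (y s / wmix P rho gamma al pistar (pi k) s) ^+ 2) * (S / 2)); last first.
  by field; rewrite hwn hrn hLn.
  have N0 : 0 <= (1 + x s / rho_min) * (y s / wmix P rho gamma al pistar (pi k) s) ^+ 2.
    apply: mulr_ge0; last exact: sqr_ge0.
    by apply: addr_ge0 => //; apply: divr_ge0; [exact: le_trans (ltW hrm) xr | exact: ltW].
  have La0 : 0 <= L * al ^+ 2 by apply: mulr_ge0; [exact: ltW | exact: sqr_ge0].
  apply: (@le_trans _ _ (L * al ^+ 2 * ((1 + x s / rho_min) *
      (y s / wmix P rho gamma al pistar (pi k) s) ^+ 2))).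
    rewrite -[leRHS]mulr1; apply: ler_wpM2l; first exact: mulr_ge0.
    by rewrite ler_pdivrMr // mul1r.
  by apply: ler_wpM2l => //; rewrite /wmix; exact: nk.
apply: le_trans (ler_sum _ (fun s _ => hterm s)) _.
rewrite -mulr_sumr /Mc [leRHS]mulrCA [leRHS]mulrA; apply: ler_wpM2l.
  by apply: mulr_ge0; [exact: ltW | exact: sqr_ge0].
rewrite big_split /= -!mulr_sumr -!mulr_suml.
have hx : \sum_s x s = 1 / (1 - gamma) by apply: dst_sum'.
have hy : \sum_s y s ^+ 2 <= 1 / (1 - gamma) ^+ 2.
  apply: (@le_trans _ _ (\sum_s y s * (1 / (1 - gamma)))).
    apply: ler_sum => s _; rewrite expr2; apply: ler_wpM2l.
      by case/andP: (dst_bnd hP hrho hg hps s).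
    by case/andP: (dst_bnd hP hrho hg hps s).
  rewrite -mulr_suml dst_sum' // expr2.
  by rewrite le_eqVlt; apply/orP; left; apply/eqP; field; rewrite lt0r_neq0.
rewrite hx; apply: lerD.
  rewrite mulrA [leRHS](_ : _ = 3 / rho_min ^+ 2 * (1 / (1 - gamma) ^+ 2)); last first.
    by field; rewrite !lt0r_neq0.
  rewrite (_ : 3 * (\sum_s y s ^+ 2) / rho_min ^+ 2 = 3 / rho_min ^+ 2 * \sum_s y s ^+ 2).
    by apply: ler_wpM2l => //; rewrite divr_ge0 // sqr_ge0.
  by rewrite mulrAC.
rewrite (_ : 4 * (1 / (1 - gamma) / rho_min) = 4 / ((1 - gamma) * rho_min)) //.
by field; rewrite !lt0r_neq0.
Qed.
Lemma step k al : 0 <= al <= 1 ->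
  al * G pistar + (1 - al) * G (pi k) - al ^+ 2 * Mc <= G (pi k.+1).
Proof.
move=> hal.
have hpk := pol_k k; have hpk1 := pol_k k.+1.
have heta : 0 < rho_min / L by rewrite divr_gt0.
have hpb := mix_policy hP hrho hg hrho0 hps hpk hal.
set pb := mixpol P rho gamma al pistar (pi k) in hpb *.
set Q := Qfun P gamma (pi k) (pseudo_reward P F gamma rho (pi k)).
set g := grad G (pi k).
have hA : G (pi k) + frob_inner g (pi k.+1 - pi k) - L / 2 * sqnorm2 (pi k.+1 - pi k)
    <= G (pi k.+1).
  have := hsm hpk1 hpk; rewrite ler_norml => /andP[H _]; rewrite -/g in H; lra.
have hE : G pb - G (pi k) - frob_inner g (pb - pi k) <= L / 2 * sqnorm2 (pb - pi k).
  have := hsm hpb hpk; rewrite ler_norml => /andP[_ H]; exact: H.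
rewrite /g (GI hP hrho hg hdiff hU hL hsm hpk hpk1) -/Q in hA.
rewrite /g (GI hP hrho hg hdiff hU hL hsm hpk hpb) -/Q in hE.
have hsqD : sqnorm2 (pi k.+1 - pi k) = \sum_s \sum_a (pi k.+1 s a - pi k s a) ^+ 2.
  by apply: eq_bigr => s _; apply: eq_bigr => a _; rewrite mx_subE expr2.
have hC : forall s,
    dst (pi k) s * \sum_a (pb s a - pi k s a) * Q s a -
      dst (pi k) s / (2 * (rho_min / L)) * \sum_a (pb s a - pi k s a) ^+ 2 <=
    dst (pi k) s * \sum_a (pi k.+1 s a - pi k s a) * Q s a -
      dst (pi k) s / (2 * (rho_min / L)) * \sum_a (pi k.+1 s a - pi k s a) ^+ 2.
  move=> s.
  apply: (@proj_ineq _ _ (fun a => pi k s a) (fun a => pi k.+1 s a) (fun a => pb s a)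
     (fun a => Q s a)) => //.
    by case/andP: (dst_bnd hP hrho hg hpk s).
  by have [_ H] := hstep k s; exact: H _ (hpb s).
have hD : forall s, L / 2 * \sum_a (pi k.+1 s a - pi k s a) ^+ 2 <=
    dst (pi k) s / (2 * (rho_min / L)) * \sum_a (pi k.+1 s a - pi k s a) ^+ 2.
  move=> s; apply: ler_wpM2r; first by apply: sumr_ge0 => a _; exact: sqr_ge0.
  have xr : rho_min <= dst (pi k) s := le_trans (hrmin s) (dst_ge_rho hP hrho hg hpk s).
  rewrite -subr_ge0 (_ : _ - _ = L * (dst (pi k) s - rho_min) / (2 * rho_min)).
    by apply: divr_ge0; [apply: mulr_ge0; [exact: ltW | rewrite subr_ge0] | apply: mulr_ge0 => //; exact: ltW].
  by field; rewrite !lt0r_neq0.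
have hCs := @ler_sum _ _ (index_enum 'I_n) xpredT _ _ (fun s _ => hC s).
have hDs := @ler_sum _ _ (index_enum 'I_n) xpredT _ _ (fun s _ => hD s).
rewrite !sumrB in hCs.
rewrite -mulr_sumr -hsqD in hDs.
have hG : al * G pistar + (1 - al) * G (pi k) <= G pb.
  rewrite /Gobj /pb (mix_occ hP hrho hg hrho0 hps hpk hal).
  apply: hconc => //; [by exists pistar | by exists (pi k)].
have hM := cost_bnd k hal; rewrite -/pb in hM.
move: hA hE hCs hDs hG hM.
move: (G pistar) (G (pi k)) (G (pi k.+1)) (G pb) => a1 a2 a3 a4.
move: (\sum_s dst (pi k) s * \sum_a (pi k.+1 s a - pi k s a) * Q s a) => b1.
move: (\sum_s dst (pi k) s * \sum_a (pb s a - pi k s a) * Q s a) => b2.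
move: (\sum_s dst (pi k) s / (2 * (rho_min / L)) * \sum_a (pi k.+1 s a - pi k s a) ^+ 2) => b3.
move: (\sum_s dst (pi k) s / (2 * (rho_min / L)) * \sum_a (pb s a - pi k s a) ^+ 2) => b4.
move: (L / 2 * sqnorm2 (pi k.+1 - pi k)) (L / 2 * sqnorm2 (pb - pi k)) => c1 c2.
clearbody g Q pb; move=> *; lra.
Qed.

Lemma Mc_ge0 : 0 <= Mc.
Proof.
have hg1 : 0 < 1 - gamma by rewrite subr_gt0; case/andP: hg.
rewrite /Mc; apply: mulr_ge0; first exact: ltW.
by apply: addr_ge0; apply: divr_ge0 => //; apply: mulr_ge0; rewrite ?exprn_ge0 // ltW.
Qed.

Lemma rec_num (M c : R) : 0 <= M -> 1 <= c ->
  (1 - 2 / (c + 1)) * (4 * M / c) + (2 / (c + 1)) ^+ 2 * M <= 4 * M / (c + 1).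
Proof.
move=> M0 c1.
have c0 : 0 < c by exact: lt_le_trans ltr01 c1.
have cn : c != 0 by rewrite lt0r_neq0.
have c1n : c + 1 != 0 by rewrite lt0r_neq0 // ltr_wpDr // ltW.
rewrite -subr_ge0.
have -> : 4 * M / (c + 1) - ((1 - 2 / (c + 1)) * (4 * M / c) + (2 / (c + 1)) ^+ 2 * M)
   = 4 * M / (c * (c + 1) ^+ 2) by field; rewrite ?cn ?c1n.
apply: divr_ge0; first by apply: mulr_ge0.
by apply: mulr_ge0; [exact: ltW | apply: exprn_ge0; apply: addr_ge0 => //; exact: ltW].
Qed.

Lemma rate k : (1 <= k)%N -> G pistar - G (pi k) <= 4 * Mc / k.+1%:R.
Proof.
have M0 := Mc_ge0.
elim: k => [//|k IH] _.
case: k IH => [_|k IH].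
  have := step 0 (al := 1); rewrite lexx ler01 => /(_ isT).
  rewrite subrr mul0r addr0 mul1r expr1n mul1r => H.
  apply: (@le_trans _ _ Mc); first by lra.
  rewrite ler_pdivlMr ?ltr0n // mulrC ler_wpM2r // ler_nat //.
have := IH isT => {}IH.
set c : R := k.+2%:R.
have c1 : 1 <= c by rewrite ler1n.
have c0 : 0 < c + 1 by rewrite ltr_wpDl // ltW // (lt_le_trans ltr01 c1).
have hal : 0 <= 2 / (c + 1) <= 1.
  apply/andP; split; first by apply: divr_ge0 => //; exact: ltW.
  by rewrite ler_pdivrMr // mul1r (_ : 2 = 1 + 1) // lerD2r.
have := step k.+1 hal => H.
have hc2 : k.+3%:R = c + 1 by rewrite /c natr1.
rewrite hc2.
apply: le_trans (rec_num M0 c1).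
have h1a : 0 <= 1 - 2 / (c + 1) by case/andP: hal => _ ?; rewrite subr_ge0.
have := ler_wpM2l h1a IH => H2.
move: H H2; move: (G pistar) (G (pi k.+1)) (G (pi k.+2)) (2 / (c + 1)) (4 * Mc / c) => a b d al x.
move=> *; nra.
Qed.

End Main.
Section Fin.
Variable R : realType.
Lemma final_num (L a r Kn : R) : 0 < L -> 0 < a -> a <= 1 -> 0 < r -> 1 <= Kn ->
  4 * (L * (3 / (a ^+ 2 * r ^+ 2) + 4 / (a * r))) / (Kn + 1) <=
  32 * L * (1 + 1 / (a * r)) / (a ^+ 2 * r * Kn).
Proof.
move=> L0 a0 a1 r0 K1.
have K0 : 0 < Kn by exact: lt_le_trans ltr01 K1.
have an : a != 0 by rewrite lt0r_neq0.
have rn : r != 0 by rewrite lt0r_neq0.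
have Kn0 : Kn != 0 by rewrite lt0r_neq0.
set M := L * (3 / (a ^+ 2 * r ^+ 2) + 4 / (a * r)).
have M0 : 0 <= M.
  apply: mulr_ge0; first exact: ltW.
  by apply: addr_ge0; apply: divr_ge0 => //; apply: mulr_ge0; rewrite ?exprn_ge0 // ltW.
apply: (@le_trans _ _ (4 * M / Kn)).
  apply: ler_wpM2l; first by apply: mulr_ge0.
  rewrite lef_pV2 ?posrE //; last by rewrite ltr_wpDr // ltW.
  by rewrite lerDl.
rewrite -subr_ge0.
have -> : 32 * L * (1 + 1 / (a * r)) / (a ^+ 2 * r * Kn) - 4 * M / Kn =
   L * (16 * (2 - a) / (a ^+ 2 * r) + 4 * (8 - 3 * a) / (a ^+ 3 * r ^+ 2)) / Kn.
  by rewrite /M; field; rewrite an rn Kn0.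
apply: divr_ge0; last exact: ltW.
apply: mulr_ge0; first exact: ltW.
apply: addr_ge0; apply: divr_ge0.
- lra.
- by apply: mulr_ge0; [apply: exprn_ge0|]; exact: ltW.
- lra.
- by apply: mulr_ge0; apply: exprn_ge0; exact: ltW.
Qed.
End Fin.

Local Open Scope ring_scope.

Theorem theorem4 (R : realType) (n m : nat)
  (P : 'I_n -> 'I_m -> 'I_n -> R) (rho : 'I_n -> R) (gamma : R)
  (F : 'M[R]_(n, m) -> R) (rho_min U L : R)
  (pistar : 'M[R]_(n, m)) (pi : nat -> 'M[R]_(n, m)) :
  is_kernel P ->
  is_distr rho ->
  0 <= gamma < 1 ->
  (* F concave on K and differentiable at every point of K *)
  (forall mu1 mu2 (t : R), occ_set P gamma rho mu1 -> occ_set P gamma rho mu2 ->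
     0 <= t <= 1 ->
     t * F mu1 + (1 - t) * F mu2 <= F (t *: mu1 + (1 - t) *: mu2)) ->
  (forall mu, occ_set P gamma rho mu -> differentiable F mu) ->
  (* (i) *)
  0 < rho_min -> (forall s, rho_min <= rho s) ->
  (* (ii) *)
  0 <= U ->
  (forall p, is_policy p -> forall s a,
     0 <= pseudo_reward P F gamma rho p s a <= U) ->
  (* (iii) L-smoothness of G *)
  0 < L ->
  (forall p p', is_policy p -> is_policy p' ->
     `| Gobj P F gamma rho p - Gobj P F gamma rho p'
        - frob_inner (grad (Gobj P F gamma rho) p') (p - p') |
     <= L / 2 * sqnorm2 (p - p')) ->
  (* pi* is a maximizer of G over policies *)
  is_policy pistar ->
  (forall p, is_policy p -> Gobj P F gamma rho p <= Gobj P F gamma rho pistar) ->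
  (* PQA iterates with eta = rho_min / L *)
  is_policy (pi 0%N) ->
  (forall k, pqa_step P F gamma rho (rho_min / L) (pi k) (pi k.+1)) ->
  forall K : nat, (1 <= K)%N ->
    Gobj P F gamma rho pistar - Gobj P F gamma rho (pi K)
    <= 32 * L * (1 + 1 / ((1 - gamma) * rho_min))
       / ((1 - gamma) ^+ 2 * rho_min * K%:R).
Proof.
move=> hP hrho hg hconc hdiff hrm hrmin hU0 hU hL hsm hps hopt hp0 hstep K hK.
have H := rate hP hrho hg hconc hdiff hrm hrmin hU hL hsm hps hp0 hstep hK.
apply: le_trans H _.
have hg1 : 0 < 1 - gamma by rewrite subr_gt0; case/andP: hg.
have ha1 : 1 - gamma <= 1 by rewrite lerBlDr lerDl; case/andP: hg.
rewrite -(natr1 K) /Mc.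
apply: final_num => //.
by rewrite ler1n.
Qed.
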